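(* Let $(W,S)$ be a dihedral Coxeter system, i.e. $|S|=2$. For reflections $t,t'\in T$, we have $\ell(t')<\ell(t)$ if and only if $t'\sqsubseteq t$ and $t'\neq t$.
   Context: $(W,S)$ is a Coxeter system with length function $\ell$, reflections $T=\{wsw^{-1}:w\in W,\ s\in S\}$ and Bruhat order $\leqslant$. The Bruhat graph $\Omega_{W,S}$ has vertex set $W$ and an arrow $u\to v$ iff $uv^{-1}\in T$ and $u<v$; $\Omega_{W,S}(Y)$ is its induced subgraph on $Y$. A reflection subgroup $W'$ (a subgroup generated by reflections) has canonical Coxeter generators $S'=\{t\in T:N(t)\cap W'=\{t\}\}$, where $N(v)=\{t\in T:\ell(tv)<\ell(v)\}$; it is dihedral if $|S'|=2$. $t\sqsubseteq' t'$ iff $t=t'$ or there is a dihedral reflection subgroup $W'\ni t,t'$ such that the directed distance from $t$ to $t'$ in $\Omega_{W,S}(W')$ is finite; $\sqsubseteq$ is the transitive closure of $\sqsubseteq'$. *)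

(* Defs.v *)
From Stdlib Require Import List Arith Relations ClassicalEpsilon.
Import ListNotations.
Set Implicit Arguments.

Record group := Group {
  gcar :> Type;
  gmul : gcar -> gcar -> gcar;
  gone : gcar;
  ginv : gcar -> gcar;
  gmulA : forall x y z, gmul x (gmul y z) = gmul (gmul x y) z;
  gmul1l : forall x, gmul gone x = x;
  gmulVl : forall x, gmul (ginv x) x = gone
}.

Arguments gmul {g}.
Arguments gone {g}.
Arguments ginv {g}.

Fixpoint gpow {G : group} (x : G) (n : nat) : G :=
  match n with 0 => gone | S k => gmul x (gpow x k) end.

Definition subgroup {G : group} (P : G -> Prop) : Prop :=
  P gone /\ (forall x y, P x -> P y -> P (gmul x y)) /\ (forall x, P x -> P (ginv x)).

Definition generated {G : group} (X : G -> Prop) (w : G) : Prop :=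
  forall P : G -> Prop, subgroup P -> (forall x, X x -> P x) -> P w.

Definition hom {G H : group} (phi : G -> H) : Prop :=
  forall x y, phi (gmul x y) = gmul (phi x) (phi y).

(* ---------- Coxeter systems (Bourbaki) ----------
   S is a set of elements of order 2 generating W, and W has the presentation
   < S | (s s')^{m(s,s')} = 1 >, m(s,s') the order of s s' (infinite allowed);
   stated via the universal property of the presentation. *)
Definition coxeter_system {W : group} (S : W -> Prop) : Prop :=
  (forall s, S s -> s <> gone /\ gmul s s = gone) /\
  (forall w, generated S w) /\
  (forall (H : group) (f : W -> H),
     (forall s s' k, S s -> S s' -> gpow (gmul s s') k = gone ->
                     gpow (gmul (f s) (f s')) k = gone) ->
     exists phi : W -> H, hom phi /\ forall s, S s -> phi s = f s).

Definition dihedral_system {W : group} (S : W -> Prop) : Prop :=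
  exists a b : W, a <> b /\ forall x, S x <-> x = a \/ x = b.

Section Coxeter.
Context {W : group} (S : W -> Prop).

Definition word_prod (l : list W) : W := fold_right gmul gone l.

Definition expressible (w : W) (n : nat) : Prop :=
  exists l : list W, length l = n /\ Forall S l /\ word_prod l = w.

Definition len (w : W) : nat :=
  epsilon (inhabits 0)
    (fun n => expressible w n /\ forall m, expressible w m -> n <= m).

Definition reflection (t : W) : Prop :=
  exists w s, S s /\ t = gmul (gmul w s) (ginv w).

Definition bruhat_step (u v : W) : Prop :=
  exists t, reflection t /\ v = gmul t u /\ len u < len v.

Definition bruhat_le : relation W := clos_refl_trans W bruhat_step.
Definition bruhat_lt (u v : W) : Prop := bruhat_le u v /\ u <> v.

Definition bruhat_arrow (u v : W) : Prop :=
  reflection (gmul u (ginv v)) /\ bruhat_lt u v.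

Definition induced_arrow (Y : W -> Prop) (u v : W) : Prop :=
  Y u /\ Y v /\ bruhat_arrow u v.

Definition finite_dist (Y : W -> Prop) (x y : W) : Prop :=
  Y x /\ Y y /\ clos_refl_trans W (induced_arrow Y) x y.

Definition reflection_subgroup (P : W -> Prop) : Prop :=
  exists X : W -> Prop, (forall x, X x -> reflection x) /\
                        (forall w, P w <-> generated X w).

Definition inv_set (v t : W) : Prop := reflection t /\ len (gmul t v) < len v.

Definition canon_gens (P : W -> Prop) (t : W) : Prop :=
  reflection t /\ forall x, (inv_set t x /\ P x) <-> x = t.

Definition dihedral_refl_subgroup (P : W -> Prop) : Prop :=
  reflection_subgroup P /\
  exists a b, a <> b /\ forall t, canon_gens P t <-> t = a \/ t = b.

Definition sqsub1 (t t' : W) : Prop :=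
  t = t' \/
  exists P, dihedral_refl_subgroup P /\ P t /\ P t' /\ finite_dist P t t'.

Definition sqsub : relation W := clos_trans W sqsub1.

End Coxeter.

(* Main.v *)
Require Import Defs.
From Stdlib Require Import List Arith Relations.
From Stdlib Require Import Lia Classical ClassicalEpsilon.
Import ListNotations.
Arguments gmulA {g} x y z.
Arguments gmul1l {g} x.
Arguments gmulVl {g} x.

Lemma g_mulVr {G : group} (x : G) : gmul x (ginv x) = gone.
Proof.
  transitivity (gmul (gmul (ginv (ginv x)) (ginv x)) (gmul x (ginv x))).
  - rewrite gmulVl, gmul1l. reflexivity.
  - rewrite <- gmulA, (gmulA (ginv x) x), gmulVl, gmul1l. apply gmulVl.
Qed.

Lemma g_mul1r {G : group} (x : G) : gmul x gone = x.
Proof. rewrite <- (gmulVl x), gmulA, g_mulVr, gmul1l. reflexivity. Qed.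

Lemma g_inv_uniq {G : group} (a b : G) : gmul a b = gone -> a = ginv b.
Proof.
  intro H. rewrite <- (g_mul1r a), <- (g_mulVr b), gmulA, H, gmul1l. reflexivity.
Qed.

Lemma g_inv_mul {G : group} (x y : G) : ginv (gmul x y) = gmul (ginv y) (ginv x).
Proof.
  symmetry. apply g_inv_uniq.
  rewrite <- gmulA, (gmulA (ginv x) x), gmulVl, gmul1l. apply gmulVl.
Qed.

Lemma g_inv_one {G : group} : ginv (@gone G) = gone.
Proof. symmetry. apply g_inv_uniq. apply gmul1l. Qed.

Lemma g_inv_invol {G : group} (s : G) : gmul s s = gone -> ginv s = s.
Proof. intro H. symmetry. apply g_inv_uniq. exact H. Qed.

Definition Bgrp : group.
Proof.
  refine (@Group bool xorb false (fun b => b) _ _ _).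
  - intros [] [] []; reflexivity.
  - intros []; reflexivity.
  - intros []; reflexivity.
Defined.

Lemma word_prod_app {W : group} (l1 l2 : list W) :
  word_prod (l1 ++ l2) = gmul (word_prod l1) (word_prod l2).
Proof.
  induction l1 as [|x l IH]; simpl.
  - rewrite gmul1l. reflexivity.
  - rewrite IH, gmulA. reflexivity.
Qed.

Lemma bruhat_le_len {W : group} {S : W -> Prop} u v :
  bruhat_le S u v -> u = v \/ len S u < len S v.
Proof.
  induction 1 as [x y [t [_ [_ H]]] | x | x y z _ IH1 _ IH2].
  - right; exact H.
  - left; reflexivity.
  - destruct IH1 as [-> | H1]; destruct IH2 as [-> | H2]; auto; right; lia.
Qed.

Lemma sqsub1_len {W : group} {S : W -> Prop} u v :
  sqsub1 S u v -> u = v \/ len S u < len S v.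
Proof.
  intros [-> | [P [_ [_ [_ [_ [_ H]]]]]]]; [left; reflexivity|].
  induction H as [x y [_ [_ [_ [Hle Hne]]]] | x | x y z _ IH1 _ IH2].
  - destruct (bruhat_le_len _ _ Hle) as [E|E]; [contradiction|right; exact E].
  - left; reflexivity.
  - destruct IH1 as [-> | H1]; destruct IH2 as [-> | H2]; auto; right; lia.
Qed.

Lemma sqsub_len {W : group} {S : W -> Prop} u v :
  sqsub S u v -> u = v \/ len S u < len S v.
Proof.
  induction 1 as [x y H | x y z _ IH1 _ IH2].
  - apply (sqsub1_len _ _ H).
  - destruct IH1 as [-> | H1]; destruct IH2 as [-> | H2]; auto; right; lia.
Qed.

Definition SInv {W : group} (S : W -> Prop) :=
  forall s, S s -> s <> gone /\ gmul s s = gone.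

Lemma word_prod_rev {W : group} {S : W -> Prop} (HS : SInv S) l :
  Forall S l -> word_prod (rev l) = ginv (word_prod l).
Proof.
  induction 1 as [|x l Hx _ IH]; simpl.
  - rewrite g_inv_one. reflexivity.
  - rewrite word_prod_app, IH, g_inv_mul. simpl. rewrite g_mul1r.
    rewrite (g_inv_invol _ (proj2 (HS x Hx))). reflexivity.
Qed.

Lemma expr_exists {W : group} {S : W -> Prop} (HS : SInv S)
  (Hgen : forall w, generated S w) w : exists n, expressible S w n.
Proof.
  apply (Hgen w (fun w => exists n, expressible S w n)).
  - split; [|split].
    + exists 0, []. simpl. auto.
    + intros x y [n [l [Hl [Hf Hp]]]] [m [l' [Hl' [Hf' Hp']]]].
      exists (n + m), (l ++ l'). rewrite length_app, word_prod_app.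
      subst. repeat split; auto. apply Forall_app; auto.
    + intros x [n [l [Hl [Hf Hp]]]]. exists n, (rev l).
      rewrite length_rev, (word_prod_rev HS _ Hf). subst.
      repeat split; auto. apply Forall_rev; auto.
  - intros x Hx. exists 1, [x]. simpl. rewrite g_mul1r. auto.
Qed.

Lemma len_spec {W : group} {S : W -> Prop} (HS : SInv S)
  (Hgen : forall w, generated S w) w :
  expressible S w (len S w) /\ forall m, expressible S w m -> len S w <= m.
Proof.
  unfold len. apply epsilon_spec.
  destruct (expr_exists HS Hgen w) as [n Hn].
  revert Hn. induction n as [n IH] using (well_founded_induction lt_wf). intro Hn.
  destruct (classic (forall m, expressible S w m -> n <= m)) as [H|H].
  - exists n; auto.
  - apply not_all_ex_not in H. destruct H as [m Hm].
    apply imply_to_and in Hm. destruct Hm as [Hm1 Hm2].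
    apply (IH m); [lia|exact Hm1].
Qed.

Lemma len_le {W : group} {S : W -> Prop} (HS : SInv S)
  (Hgen : forall w, generated S w) l :
  Forall S l -> len S (word_prod l) <= length l.
Proof.
  intro H. apply (proj2 (len_spec HS Hgen (word_prod l))). exists l. auto.
Qed.

Lemma len_red {W : group} {S : W -> Prop} (HS : SInv S)
  (Hgen : forall w, generated S w) w :
  exists l, length l = len S w /\ Forall S l /\ word_prod l = w /\
    forall l', Forall S l' -> word_prod l' = w -> length l <= length l'.
Proof.
  destruct (len_spec HS Hgen w) as [[l [H1 [H2 H3]]] H4].
  exists l. repeat split; auto. intros l' Hf Hp. rewrite H1. apply H4. exists l'; auto.
Qed.

Lemma len0 {W : group} {S : W -> Prop} (HS : SInv S)
  (Hgen : forall w, generated S w) w : len S w = 0 -> w = gone.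
Proof.
  intro H. destruct (len_red HS Hgen w) as [l [H1 [_ [H3 _]]]].
  rewrite H in H1. destruct l; [|discriminate]. rewrite <- H3. reflexivity.
Qed.

Lemma odd_S n : Nat.odd (S n) = negb (Nat.odd n).
Proof. rewrite Nat.odd_succ, Nat.negb_odd. reflexivity. Qed.

Lemma phi_mul {W : group} {phi : W -> Bgrp} (Hh : hom phi) x y :
  phi (gmul x y) = xorb (phi x) (phi y).
Proof. exact (Hh x y). Qed.

Lemma phi_one {W : group} {phi : W -> Bgrp} (Hh : hom phi) : phi gone = false.
Proof.
  pose proof (phi_mul Hh gone gone) as h. rewrite gmul1l in h.
  destruct (phi gone); [simpl in h; discriminate|reflexivity].
Qed.

Lemma phi_inv {W : group} {phi : W -> Bgrp} (Hh : hom phi) w :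
  phi (ginv w) = phi w.
Proof.
  pose proof (phi_mul Hh (ginv w) w) as h. rewrite gmulVl, (phi_one Hh) in h.
  destruct (phi (ginv w)), (phi w); simpl in h; congruence.
Qed.

Lemma phi_word {W : group} {S : W -> Prop} {phi : W -> Bgrp} (Hh : hom phi)
  (Hp : forall s, S s -> phi s = true) l :
  Forall S l -> phi (word_prod l) = Nat.odd (length l).
Proof.
  induction 1 as [|x l Hx _ IH]; simpl.
  - apply (phi_one Hh).
  - rewrite (phi_mul Hh), IH, Hp by exact Hx. rewrite odd_S. reflexivity.
Qed.

Lemma phi_len {W : group} {S : W -> Prop} (HS : SInv S)
  (Hgen : forall w, generated S w) {phi : W -> Bgrp} (Hh : hom phi)
  (Hp : forall s, S s -> phi s = true) w : phi w = Nat.odd (len S w).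
Proof.
  destruct (len_red HS Hgen w) as [l [H1 [H2 [H3 _]]]].
  rewrite <- H3 at 1. rewrite (phi_word Hh Hp _ H2), H1. reflexivity.
Qed.

Lemma refl_odd {W : group} {S : W -> Prop} (HS : SInv S)
  (Hgen : forall w, generated S w) {phi : W -> Bgrp} (Hh : hom phi)
  (Hp : forall s, S s -> phi s = true) t :
  reflection S t -> Nat.odd (len S t) = true.
Proof.
  intros [w [s [Hs ->]]]. rewrite <- (phi_len HS Hgen Hh Hp).
  rewrite !(phi_mul Hh), (phi_inv Hh), (Hp s Hs). destruct (phi w); reflexivity.
Qed.

Fixpoint alt {W : group} (x y : W) (n : nat) : list W :=
  match n with 0 => [] | S n => x :: alt y x n end.

Lemma alt_snoc {W : group} k : forall (x y : W),
  alt x y (2*k+1) = alt x y (2*k) ++ [x] /\ alt x y (2*k+2) = alt x y (2*k+1) ++ [y].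
Proof.
  induction k as [|k IH]; intros x y.
  - simpl. auto.
  - replace (2 * S k + 1) with (S (S (2*k+1))) by lia.
    replace (2 * S k + 2) with (S (S (2*k+2))) by lia.
    replace (2 * S k) with (S (S (2*k))) by lia.
    cbn [alt]. destruct (IH x y) as [H1 H2]. rewrite H2. split; cbn [app]; rewrite ?H1; reflexivity.
Qed.

Lemma ar1 k : 2 * S k + 1 = S (2*k+2).
Proof. lia. Qed.

Lemma alt_refl {W : group} {S : W -> Prop} (HS : SInv S) k : forall x y,
  S x -> S y -> reflection S (word_prod (alt x y (2*k+1))).
Proof.
  induction k as [|k IH]; intros x y Hx Hy.
  - simpl. exists gone, x. split; auto.
    rewrite gmul1l, g_inv_one, !g_mul1r. reflexivity.
  - rewrite ar1. cbn [alt]. change (word_prod (x :: ?l)) with (gmul x (word_prod l)).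
    rewrite (proj2 (alt_snoc k y x)), word_prod_app.
    destruct (IH y x Hy Hx) as [w [s [Hs ->]]].
    exists (gmul x w), s. split; auto. simpl. rewrite g_mul1r.
    rewrite g_inv_mul, (g_inv_invol _ (proj2 (HS x Hx))).
    rewrite !gmulA. reflexivity.
Qed.

Lemma pair_S {W : group} {S : W -> Prop} (a b : W)
  (HSab : forall x, S x <-> x = a \/ x = b) x y z :
  S x -> S y -> x <> y -> S z -> z = x \/ z = y.
Proof.
  rewrite !HSab. intros [->| ->] [->| ->] Hne [->| ->]; auto; congruence.
Qed.

Definition red {W : group} (S : W -> Prop) (l : list W) :=
  Forall S l /\ forall l', Forall S l' -> word_prod l' = word_prod l -> length l <= length l'.

Lemma red_tail {W : group} {S : W -> Prop} x m : red S (x :: m) -> red S m.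
Proof.
  intros [Hf H]. inversion Hf; subst. split; auto.
  intros l' Hf' Hp. specialize (H (x :: l')). simpl in H.
  assert (Datatypes.S (length m) <= Datatypes.S (length l')); [|lia].
  apply H; [constructor; auto| rewrite Hp; reflexivity].
Qed.

Lemma red_nodup {W : group} {S : W -> Prop} (HS : SInv S) x m :
  red S (x :: x :: m) -> False.
Proof.
  intros [Hf H]. inversion Hf as [|? ? Hx1 Hf1]; subst. inversion Hf1 as [|? ? Hx2 Hf2]; subst.
  specialize (H m). simpl in H.
  assert (Datatypes.S (Datatypes.S (length m)) <= length m); [|lia].
  apply H.
  - exact Hf2.
  - rewrite gmulA, (proj2 (HS x Hx1)), gmul1l. reflexivity.
Qed.

Lemma alt_of_red {W : group} {S : W -> Prop} (HS : SInv S) (a b : W)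
  (HSab : forall x, S x <-> x = a \/ x = b) m : forall x y,
  S x -> S y -> x <> y -> red S (x :: m) -> x :: m = alt x y (Datatypes.S (length m)).
Proof.
  induction m as [|z m IH]; intros x y Hx Hy Hne Hr.
  - reflexivity.
  - pose proof Hr as [Hf _]. inversion Hf; subst. inversion H2; subst.
    destruct (pair_S a b HSab x y z Hx Hy Hne H3) as [-> | ->].
    + exfalso. exact (red_nodup HS x m Hr).
    + cbn [length alt]. f_equal. apply IH; auto. eapply red_tail; exact Hr.
Qed.

Lemma red_of_len {W : group} {S : W -> Prop} (HS : SInv S)
  (Hgen : forall w, generated S w) w :
  exists l, length l = len S w /\ word_prod l = w /\ red S l.
Proof.
  destruct (len_red HS Hgen w) as [l [H1 [H2 [H3 H4]]]].
  exists l. repeat split; auto. intros l' Hf Hp. apply H4; congruence.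
Qed.

Lemma odd_refl {W : group} {S : W -> Prop} (HS : SInv S)
  (Hgen : forall w, generated S w) (a b : W) (Hab : a <> b)
  (HSab : forall x, S x <-> x = a \/ x = b) w :
  Nat.odd (len S w) = true -> reflection S w.
Proof.
  intro Ho. destruct (red_of_len HS Hgen w) as [l [H1 [H2 H3]]].
  destruct l as [|x m]; [rewrite <- H1 in Ho; discriminate|].
  assert (Hx : S x) by (destruct H3 as [Hf _]; inversion Hf; auto).
  assert (exists y, S y /\ x <> y) as [y [Hy Hne]].
  { pose proof Hx as Hx'. apply HSab in Hx' as [-> | ->].
    - exists b. split; [apply HSab; auto| exact Hab].
    - exists a. split; [apply HSab; auto| auto]. }
  rewrite (alt_of_red HS a b HSab m x y Hx Hy Hne H3) in H2.
  rewrite <- H1 in Ho. cbn [length] in Ho.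
  apply Nat.odd_spec in Ho. destruct Ho as [k Hk]. rewrite Hk in H2.
  rewrite <- H2. apply alt_refl; auto.
Qed.

Lemma S_refl {W : group} {S : W -> Prop} s : S s -> reflection S s.
Proof.
  intro Hs. exists gone, s. split; auto. rewrite gmul1l, g_inv_one, g_mul1r. reflexivity.
Qed.

Lemma canon_S {W : group} {S : W -> Prop} (HS : SInv S)
  (Hgen : forall w, generated S w) s :
  S s -> canon_gens S (fun _ => True) s.
Proof.
  intro Hs. split; [apply S_refl; auto|]. intro x. split.
  - intros [[_ Hl] _].
    assert (Hs1 : len S s <= 1).
    { pose proof (len_le HS Hgen [s]) as h. simpl in h. rewrite g_mul1r in h.
      apply h. constructor; auto. }
    assert (H0 : gmul x s = gone) by (apply (len0 HS Hgen); lia).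
    apply g_inv_uniq in H0. rewrite H0. apply g_inv_invol. apply (HS s Hs).
  - intros ->. split; [|trivial]. split; [apply S_refl; auto|].
    rewrite (proj2 (HS s Hs)).
    assert (len S gone <= 0) by exact (len_le HS Hgen [] (Forall_nil _)).
    assert (len S s <> 0); [|lia].
    intro E. apply (proj1 (HS s Hs)). apply (len0 HS Hgen). exact E.
Qed.

Lemma canon_iff {W : group} {S : W -> Prop} (HS : SInv S)
  (Hgen : forall w, generated S w) {phi : W -> Bgrp} (Hh : hom phi)
  (Hp : forall s, S s -> phi s = true) (a b : W)
  (HSab : forall x, S x <-> x = a \/ x = b) t :
  canon_gens S (fun _ => True) t <-> t = a \/ t = b.
Proof.
  split.
  - intros [Hr H]. apply HSab.
    pose proof (refl_odd HS Hgen Hh Hp t Hr) as Ho.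
    destruct (red_of_len HS Hgen t) as [l [H1 [H2 H3]]].
    destruct l as [|x m]; [rewrite <- H1 in Ho; discriminate|].
    assert (Hx : S x) by (destruct H3 as [Hf _]; inversion Hf; auto).
    assert (Hfm : Forall S m) by (destruct H3 as [Hf _]; inversion Hf; auto).
    assert (x = t) as <-; [|exact Hx].
    apply H. split; [|trivial]. split; [apply S_refl; auto|].
    rewrite <- H1, <- H2. change (word_prod (x :: m)) with (gmul x (word_prod m)).
    rewrite gmulA, (proj2 (HS x Hx)), gmul1l.
    pose proof (len_le HS Hgen m Hfm). cbn [length]. lia.
  - intros [-> | ->]; apply canon_S; auto; apply HSab; auto.
Qed.

Lemma arrow {W : group} {S : W -> Prop} (HS : SInv S)
  (Hgen : forall w, generated S w) {phi : W -> Bgrp} (Hh : hom phi)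
  (Hp : forall s, S s -> phi s = true) (a b : W) (Hab : a <> b)
  (HSab : forall x, S x <-> x = a \/ x = b) u v :
  len S v = Datatypes.S (len S u) -> induced_arrow S (fun _ => True) u v.
Proof.
  intro E. split; [trivial|split; [trivial|]].
  assert (Hxo : forall p q, (p = u /\ q = v) \/ (p = v /\ q = u) ->
            reflection S (gmul p (ginv q))).
  { intros p q Hpq. apply (odd_refl HS Hgen a b Hab HSab).
    rewrite <- (phi_len HS Hgen Hh Hp), (phi_mul Hh), (phi_inv Hh).
    rewrite !(phi_len HS Hgen Hh Hp).
    destruct Hpq as [[-> ->]|[-> ->]]; rewrite E, odd_S;
      destruct (Nat.odd (len S u)); reflexivity. }
  split; [apply Hxo; auto|]. split.
  - apply rt_step. exists (gmul v (ginv u)). split; [apply Hxo; auto|].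
    split; [|lia]. rewrite <- gmulA, gmulVl, g_mul1r. reflexivity.
  - intros ->. lia.
Qed.

Lemma prefix_len {W : group} {S : W -> Prop} (HS : SInv S)
  (Hgen : forall w, generated S w) l j :
  red S l -> j <= length l -> len S (word_prod (firstn j l)) = j.
Proof.
  intros [Hf Hr] Hj.
  pose proof (firstn_skipn j l) as Esplit.
  rewrite <- Esplit in Hf. apply Forall_app in Hf as [Hf1 Hf2].
  pose proof (firstn_length_le l Hj) as Hlen.
  pose proof (len_le HS Hgen _ Hf1) as Hle.
  destruct (Nat.lt_ge_cases (len S (word_prod (firstn j l))) j) as [Hlt|Hge]; [|lia].
  exfalso.
  destruct (red_of_len HS Hgen (word_prod (firstn j l))) as [q [Hq1 [Hq2 [Hq3 _]]]].
  specialize (Hr (q ++ skipn j l)).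
  rewrite length_app, length_skipn in Hr.
  assert (length l <= length q + (length l - j)); [|lia].
  apply Hr.
  - apply Forall_app; auto.
  - rewrite word_prod_app, Hq2, <- word_prod_app, Esplit. reflexivity.
Qed.

Lemma path_ex {W : group} {S : W -> Prop} (HS : SInv S)
  (Hgen : forall w, generated S w) {phi : W -> Bgrp} (Hh : hom phi)
  (Hp : forall s, S s -> phi s = true) (a b : W) (Hab : a <> b)
  (HSab : forall x, S x <-> x = a \/ x = b) u t :
  len S u < len S t -> clos_refl_trans W (induced_arrow S (fun _ => True)) u t.
Proof.
  intro Hlt. destruct (red_of_len HS Hgen t) as [l [H1 [H2 H3]]].
  assert (Hd : forall d, len S u + 1 + d <= length l ->
    clos_refl_trans W (induced_arrow S (fun _ => True)) u
      (word_prod (firstn (len S u + 1 + d) l))).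
  { induction d as [|d IH]; intro Hd.
    - apply rt_step. apply (arrow HS Hgen Hh Hp a b Hab HSab).
      rewrite (prefix_len HS Hgen l _ H3 Hd). lia.
    - eapply rt_trans; [apply IH; lia|]. apply rt_step.
      apply (arrow HS Hgen Hh Hp a b Hab HSab).
      rewrite !(prefix_len HS Hgen l _ H3); lia. }
  specialize (Hd (length l - len S u - 1)).
  replace (len S u + 1 + (length l - len S u - 1)) with (length l) in Hd by lia.
  rewrite firstn_all, H2 in Hd. apply Hd. lia.
Qed.

Theorem mainTheorem4 (W : group) (S : W -> Prop)
  (HC : coxeter_system S) (Hd : dihedral_system S)
  (t t' : W) (Ht : reflection S t) (Ht' : reflection S t') :
  len S t' < len S t <-> (sqsub S t' t /\ t' <> t).
Proof.
  destruct HC as [HS [Hgen Huniv]].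
  destruct (Huniv Bgrp (fun _ => true)) as [phi [Hh Hp]].
  { intros s s' k _ _ _. induction k as [|k IH]; [reflexivity|].
    cbn [gpow]. rewrite IH. reflexivity. }
  destruct Hd as [a [b [Hab HSab]]].
  split.
  - intro Hlt. split; [|intros ->; lia].
    apply t_step. right. exists (fun _ => True). split.
    + split.
      * exists S. split; [intros; apply S_refl; auto|].
        intro w; split; [intros; apply Hgen|trivial].
      * exists a, b. split; [exact Hab|]. apply (canon_iff HS Hgen Hh Hp a b HSab).
    + split; [trivial|split; [trivial|]]. split; [trivial|split; [trivial|]].
      apply (path_ex HS Hgen Hh Hp a b Hab HSab). exact Hlt.
  - intros [Hs Hne]. destruct (sqsub_len _ _ Hs) as [E|E]; [contradiction|exact E].
Qed.
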